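(* Let $\iota:\emptyset\to\{\bullet\}$ and let $e:\{a,b\}\to\{\bullet\}$ be the map from the two-point antidiscrete space to a point. Then, in $\mathrm{Top}$, $\{\iota\}^{lrrrrr}=\{e\}^r$, and this is the class of continuous maps $f:X\to Y$ such that each fibre $f^{-1}(y)$, $y\in Y$, with the subspace topology satisfies the separation axiom $T_0$.
   Context: For continuous maps $f:A\to B$, $g:C\to D$, $f\pitchfork g$ means: for all continuous $t:A\to C$, $b:B\to D$ with $g\circ t=b\circ f$ there is continuous $d:B\to C$ with $d\circ f=t$, $g\circ d=b$. For a class $P$, $P^l=\{f: f\pitchfork g\ \forall g\in P\}$, $P^r=\{g: f\pitchfork g\ \forall f\in P\}$; for a word $w$ in $l,r$, $P^w$ applies these operations from left to right (e.g. $P^{lrrrrr}=(\cdots((P^l)^r)\cdots)^r$ with five $r$'s). *)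

(* Defs.v *)
From HB Require Import structures.
From mathcomp Require Import all_boot all_order all_algebra.
From mathcomp Require Import all_classical all_reals all_analysis.
Unset Implicit Arguments. Unset Strict Implicit. Unset Printing Implicit Defensive.
Local Open Scope classical_set_scope.

(* A class of morphisms of Top: a predicate on maps between topological spaces.
   Membership in the classes built below always includes continuity. *)
Definition mclass := forall (A B : topologicalType), (A -> B) -> Prop.

Definition lifts {A B C D : topologicalType} (f : A -> B) (g : C -> D) : Prop :=
  forall (t : A -> C) (b : B -> D), continuous t -> continuous b ->
    g \o t = b \o f ->
    exists d : B -> C, [/\ continuous d, d \o f = t & g \o d = b].

Definition lorth (P : mclass) : mclass := fun A B f =>
  continuous f /\ forall (C D : topologicalType) (g : C -> D), P C D g -> lifts f g.
Definition rorth (P : mclass) : mclass := fun C D g =>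
  continuous g /\ forall (A B : topologicalType) (f : A -> B), P A B f -> lifts f g.

(* {i}^l and {i}^r for a single map i (literal unfoldings of lorth/rorth
   applied to the singleton class {i}). *)
Definition lorth1 {X Y : topologicalType} (i : X -> Y) : mclass := fun A B f =>
  continuous f /\ lifts f i.
Definition rorth1 {X Y : topologicalType} (i : X -> Y) : mclass := fun C D g =>
  continuous g /\ lifts i g.

Definition emptysp : topologicalType := discrete_topology void.
Definition pointsp : topologicalType := discrete_topology unit.

Inductive antidisc2 : Type := pt_a | pt_b.
Definition bool_of_ad (x : antidisc2) : bool := if x is pt_a then true else false.
Definition ad_of_bool (b : bool) : antidisc2 := if b then pt_a else pt_b.
Lemma bool_of_adK : cancel bool_of_ad ad_of_bool. Proof. by case. Qed.
HB.instance Definition _ := Choice.copy antidisc2 (can_type bool_of_adK).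

Definition antidisc_open : set_system antidisc2 :=
  fun A => A = set0 \/ A = setT.

Lemma antidisc_openT : antidisc_open setT.
Proof. by right. Qed.

Lemma antidisc_openI : setI_closed antidisc_open.
Proof.
move=> A B [->|->] [->|->]; rewrite ?set0I ?setI0 ?setIT ?setTI;
  by [left | right].
Qed.

Lemma antidisc_open_bigU (I : Type) (f : I -> set antidisc2) :
  (forall i, antidisc_open (f i)) -> antidisc_open (\bigcup_i f i).
Proof.
move=> Hf.
have [[i fi]|nT] := pselect (exists i, f i = setT).
- right; apply/seteqP; split=> // x _; exists i => //; by rewrite fi.
- left; apply/seteqP; split=> // x [i _ fxi].
  case: (Hf i) => fi; first by rewrite fi in fxi.
  by exfalso; apply: nT; exists i.
Qed.

HB.instance Definition _ := isOpenTopological.Build antidisc2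
  antidisc_openT antidisc_openI antidisc_open_bigU.

Definition iota_map : emptysp -> pointsp := fun _ => tt.
Definition e_map : antidisc2 -> pointsp := fun _ => tt.

Definition T0_fibres : mclass := fun X Y f =>
  continuous f /\ forall y : Y, kolmogorov_space (set_type (f @^-1` [set y])).

(* Main.v *)
Require Import Defs.
From HB Require Import structures.
From mathcomp Require Import all_boot all_order all_algebra.
From mathcomp Require Import all_classical all_reals all_analysis.
Local Open Scope classical_set_scope.

Definition boolsp : topologicalType := discrete_topology bool.

Lemma disc_cont (T : choiceType) (Z : topologicalType) (h : discrete_topology T -> Z) :
  continuous h.
Proof. by apply/continuousP => A _; apply: discrete_open. Qed.

Lemma cst_cont (A B : topologicalType) (c : B) : continuous (fun _ : A => c).
Proof. exact: cst_continuous. Qed.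

Lemma comp_cont (A B C : topologicalType) (f : A -> B) (g : B -> C) :
  continuous f -> continuous g -> continuous (g \o f).
Proof. by move=> fc gc x; apply: continuous_comp; [apply: fc|apply: gc]. Qed.

Lemma idc (A : topologicalType) : continuous (@id A).
Proof. by apply/continuousP. Qed.

Definition P0 : mclass := lorth1 iota_map.

Lemma P0_inh (A B : topologicalType) (f : A -> B) (a : A) :
  continuous f -> P0 A B f.
Proof. by move=> fc; split => // t b _ _ _; case: (t a). Qed.

Definition f0 (Y : topologicalType) : emptysp -> Y := fun v => match v with end.

Lemma f0_cont (Y : topologicalType) : continuous (f0 Y).
Proof. by move=> []. Qed.

Lemma f0_P1 (Y : topologicalType) : rorth P0 emptysp Y (f0 Y).
Proof.
split; first exact: f0_cont.
move=> A B f [fc Hf] t b tc bc sq.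
have [|dd [ddc _ _]] := Hf t (fun _ => tt) tc (@cst_cont B pointsp tt).
  by apply: funext => x.
exists dd; split => //; apply: funext => x; [case: (t x)|case: (dd x)].
Qed.

Definition Csec : mclass := fun X Y h =>
  continuous h /\ exists s : Y -> X, continuous s /\ h \o s = id.
Definition Cinj : mclass := fun X Y k => continuous k /\ injective k.
Definition Cinit : mclass := fun E F m => continuous m /\ (forall y, exists x, m x = y) /\
  (forall U : set E, open U -> exists V : set F, open V /\ U = m @^-1` V).
Definition Cind : mclass := fun C D g => continuous g /\
  forall x1 x2, g x1 = g x2 -> (forall U : set C, open U -> (U x1 <-> U x2)) -> x1 = x2.

Lemma rorth_ext (P Q : mclass) : (forall A B f, P A B f <-> Q A B f) ->
  forall C D g, rorth P C D g <-> rorth Q C D g.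
Proof.
move=> PQ C D g; split=> -[gc H]; split=> // A B f /PQ; exact: H.
Qed.

Lemma P2_iff X Y h : rorth (rorth P0) X Y h <-> Csec X Y h.
Proof.
split.
  move=> [hc H]; split => //.
  have [|d [dc _ hd]] := H _ _ _ (f0_P1 Y) (f0 X) id (f0_cont X) (@idc _).
    by apply: funext => -[].
  by exists d.
move=> [hc [s [sc hs]]]; split => // C D g [gc Hg] t b tc bc sq.
have [[c0 _]|nC] := pselect (exists c : C, True).
- have ginj : injective g.
    move=> x1 x2 gx.
    pose t0 := fun bb : boolsp => if bb then x1 else x2.
    have [|d [_ dt _]] := Hg boolsp pointsp (fun _ => tt) (@P0_inh _ _ _ true (@cst_cont boolsp pointsp tt))
        t0 (fun _ => g x1) (@disc_cont _ _ t0) (@cst_cont pointsp D (g x1)).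
      by apply: funext => -[].
    by have := congr1 (fun F => F true) dt; have := congr1 (fun F => F false) dt => /= <- <-.
  have [|r [rc _ gr]] := Hg pointsp D (fun _ => g c0) (@P0_inh _ _ _ (tt : pointsp) (@cst_cont pointsp D (g c0)))
        (fun _ => c0) id (@cst_cont pointsp C c0) (@idc _).
    by apply: funext.
  exists (t \o r); split.
  + exact: comp_cont.
  + apply: funext => x /=; congr (t _); apply: ginj.
    by have := congr1 (fun F => F (g x)) gr.
  + apply: funext => y /=; have := congr1 (fun F => F (r y)) sq => /= ->.
    by have := congr1 (fun F => F y) gr => /= ->.
- exists (s \o b); split.
  + exact: comp_cont.
  + by apply: funext => x; exfalso; apply: nC; exists x.
  + apply: funext => y /=; by have := congr1 (fun F => F (b y)) hs.
Qed.

Lemma P3_iff C D k : rorth Csec C D k <-> Cinj C D k.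
Proof.
split.
  move=> [kc H]; split => // x1 x2 kx.
  pose t0 := fun bb : boolsp => if bb then x1 else x2.
  have hsec : Csec boolsp pointsp (fun _ => tt).
    split; first exact: (@cst_cont boolsp pointsp tt).
    exists (fun _ => true); split; first exact: (@disc_cont _ _ (fun _ : pointsp => true : boolsp)).
    by apply: funext => -[].
  have [|d [_ dt _]] := H _ _ _ hsec t0 (fun _ => k x1) (@disc_cont _ _ t0)
      (@cst_cont pointsp D (k x1)).
    by apply: funext => -[].
  by have := congr1 (fun F => F true) dt; have := congr1 (fun F => F false) dt => /= <- <-.
move=> [kc kinj]; split => // X Y h [hc [s [sc hs]]] t b tc bc sq.
exists (t \o s); split.
- exact: comp_cont.
- apply: funext => x /=; apply: kinj.
  have := congr1 (fun F => F (s (h x))) sq => /= ->.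
  have := congr1 (fun F => F (h x)) hs => /= ->.
  by have := congr1 (fun F => F x) sq => /= ->.
- apply: funext => y /=; have := congr1 (fun F => F (s y)) sq => /= ->.
  by have := congr1 (fun F => F y) hs => /= ->.
Qed.

Lemma P4_iff E F m : rorth Cinj E F m <-> Cinit E F m.
Proof.
split.
  move=> [mc H]; split => //; split.
    have hi : Cinj emptysp F (f0 F) by split; [exact: f0_cont| move=> [] ].
    have [|d [_ _ md]] := H _ _ _ hi (f0 E) id (f0_cont E) (@idc _).
      by apply: funext => -[].
    by move=> y; exists (d y); have := congr1 (fun G => G y) md.
  pose W := initial_topology m.
  have hi : Cinj E W (fun x : E => x : W).
    split => //; apply/continuousP => A [B oB <-].
    by move/continuousP: mc; apply.
  have [|d [dc di _]] := H _ _ _ hi id (m : W -> F) (@idc _) (@initial_continuous E F m).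
    by [].
  have dE : forall x, d x = x by move=> x; have := congr1 (fun G => G x) di.
  move=> U oU; move/continuousP: dc => /(_ U oU) [V oV VU].
  exists V; split => //; rewrite VU; apply/seteqP; split => x /=; rewrite dE //.
move=> [mc [msurj minit]]; split => // A B i [ic iinj] t b tc bc sq.
have ex : forall y : B, exists e : E, m e = b y /\ forall x, i x = y -> t x = e.
  move=> y; have [[x0 ix0]|nx] := pselect (exists x, i x = y).
    exists (t x0); split.
      by have := congr1 (fun G => G x0) sq => /= ->; rewrite ix0.
    by move=> x ix; rewrite (iinj x x0) // ix ix0.
  have [e me] := msurj (b y); exists e; split => // x ix; exfalso; apply: nx; by exists x.
have [d Hd] := choice ex.
exists d; split.
- apply/continuousP => U oU; have [V [oV ->]] := minit U oU.
  have -> : d @^-1` (m @^-1` V) = b @^-1` V.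
    by apply/seteqP; split => y /=; rewrite (proj1 (Hd y)).
  by move/continuousP: bc; apply.
- by apply: funext => x /=; rewrite (proj2 (Hd (i x)) x).
- by apply: funext => y /=; rewrite (proj1 (Hd y)).
Qed.

Lemma ad_open (U : set antidisc2) : open U -> U = set0 \/ U = setT.
Proof. by []. Qed.

Lemma lifts_e_ind (C D : topologicalType) (g : C -> D) : lifts e_map g ->
  forall x1 x2, g x1 = g x2 -> (forall U : set C, open U -> (U x1 <-> U x2)) -> x1 = x2.
Proof.
move=> H x1 x2 gx hU.
pose t0 := fun p : antidisc2 => if p is pt_a then x1 else x2.
have t0c : continuous t0.
  apply/continuousP => A oA.
  have [Ax1|nAx1] := pselect (A x1).
    right; apply/seteqP; split => // -[] _ //=; by apply/(hU A oA).
  left; apply/seteqP; split => // -[] //= Ax2; by apply: nAx1; apply/(hU A oA).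
have [|d [_ dt _]] := H t0 (fun _ => g x1) t0c (@cst_cont pointsp D (g x1)).
  by apply: funext => -[].
by have := congr1 (fun F => F pt_a) dt; have := congr1 (fun F => F pt_b) dt => /= <- <-.
Qed.

Lemma e_Cinit : Cinit antidisc2 pointsp e_map.
Proof.
split; first exact: (@cst_cont antidisc2 pointsp tt).
split; first by move=> [] ; exists pt_a.
move=> U /ad_open [->|->].
  exists set0; split; first exact: open0.
  by apply/seteqP; split => x.
exists setT; split; first exact: openT.
by apply/seteqP; split => x.
Qed.

Lemma P5_iff C D g : rorth Cinit C D g <-> Cind C D g.
Proof.
split.
  move=> [gc H]; split => //; apply: lifts_e_ind; exact: H e_Cinit.
move=> [gc Hind]; split => // E F m [mc [msurj minit]] t b tc bc sq.
have [s Hs] := choice msurj.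
have key : forall x x', m x = m x' -> t x = t x'.
  move=> x x' mx; apply: Hind.
    have := congr1 (fun G => G x) sq => /= ->.
    by have := congr1 (fun G => G x') sq => /= ->; rewrite mx.
  move=> U oU.
  have [V [oV VU]] := minit _ ((proj1 (continuousP _)) tc U oU).
  have e1 : U (t x) <-> V (m x) by rewrite -[V (m x)]/((m @^-1` V) x) -VU.
  have e2 : U (t x') <-> V (m x') by rewrite -[V (m x')]/((m @^-1` V) x') -VU.
  by rewrite e1 e2 mx.
exists (t \o s); split.
- apply/continuousP => U oU.
  have [V [oV VU]] := minit _ ((proj1 (continuousP _)) tc U oU).
  have -> : (t \o s) @^-1` U = V.
    apply/seteqP; split => y /=.
      by rewrite -[U (t (s y))]/((t @^-1` U) (s y)) VU /= Hs.
    by move=> Vy; rewrite -[U (t (s y))]/((t @^-1` U) (s y)) VU /= Hs.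
  exact: oV.
- by apply: funext => x /=; apply: key; rewrite Hs.
- apply: funext => y /=; have := congr1 (fun G => G (s y)) sq => /= ->.
  by rewrite Hs.
Qed.

Lemma E_iff C D g : rorth1 e_map C D g <-> Cind C D g.
Proof.
split.
  by move=> [gc H]; split => //; apply: lifts_e_ind.
move=> h; have [gc H] := (proj2 (P5_iff C D g)) h.
by split => //; apply: H e_Cinit.
Qed.

Lemma T_iff (C D : topologicalType) (g : C -> D) : Cind C D g <-> T0_fibres C D g.
Proof.
split.
  move=> [gc Hind]; split => // y p q pq.
  apply: contrapT => nA; move/eqP: pq; apply; apply: val_inj.
  have gp : g (val p) = y by have := set_mem (valP p).
  have gq : g (val q) = y by have := set_mem (valP q).
  apply: Hind; first by rewrite gp gq.
  move=> U oU.
  pose A : set (set_type (g @^-1` [set y])) := val @^-1` U.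
  have oA : open A by exists U.
  split => HU; apply: contrapT => nU; apply: nA.
    exists A; left; split.
      by apply: mem_set; apply: open_nbhs_nbhs; split.
    by apply: mem_set.
  exists A; right; split.
    by apply: mem_set; apply: open_nbhs_nbhs; split.
  by apply: mem_set.
move=> [gc HT]; split => // x1 x2 gx hU.
apply: contrapT => n12.
have m1 : x1 \in g @^-1` [set g x1] by apply/mem_set.
have m2 : x2 \in g @^-1` [set g x1] by apply/mem_set.
pose p := exist _ x1 m1 : set_type (g @^-1` [set g x1]).
pose q := exist _ x2 m2 : set_type (g @^-1` [set g x1]).
have pq : p != q by apply/eqP => -[].
have [A [[/set_mem nA /set_mem qA]|[/set_mem nA /set_mem pA]]] := HT _ p q pq.
  move: nA; rewrite nbhsE => -[B [oB Bp] BA]; apply: qA; apply: BA.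
  move: oB Bp => [U oU <-] /= Ux1; by apply/(hU U oU).
move: nA; rewrite nbhsE => -[B [oB Bp] BA]; apply: pA; apply: BA.
move: oB Bp => [U oU <-] /= Ux2; by apply/(hU U oU).
Qed.

Theorem mainTheorem20 :
  (forall (X Y : topologicalType) (f : X -> Y),
     rorth (rorth (rorth (rorth (rorth (lorth1 iota_map))))) X Y f
     <-> rorth1 e_map X Y f) /\
  (forall (X Y : topologicalType) (f : X -> Y),
     rorth1 e_map X Y f <-> T0_fibres X Y f).
Proof.
split=> X Y f; last by rewrite E_iff T_iff.
rewrite E_iff -P5_iff.
apply: rorth_ext => A B h; rewrite -P4_iff.
apply: rorth_ext => A' B' h'; rewrite -P3_iff.
apply: rorth_ext => A'' B'' h''; rewrite -P2_iff.
by [].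
Qed.
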